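(* Let $R$ be a commutative unital ring and let $S \subseteq R$ be a proper unital subring such that the additive index $[R:S]$ is finite. Then there exists an ideal $I$ of $R$ with $I \subseteq S$ and $R/I$ finite (namely the conductor of $S$ in $R$, the largest ideal of $R$ contained in $S$); consequently $S/I$ is a subring of the finite ring $R/I$. Hence the proper finite-index subrings of $R$ correspond to the subrings of the finite quotient rings $R/I$, where $I$ ranges over the proper finite-index ideals of $R$. The analogous statement holds for a commutative algebra $R$ over a field $\mathbb{K}$ with ''finite index'' replaced by ''finite $\mathbb{K}$-codimension'' (for $\mathbb{K}$-subalgebras and ideals).
   Context: All rings are commutative and unital, subrings share the unit of the ambient ring. *)

(* Defs.v *)
From HB Require Import structures.
From mathcomp Require Import all_boot all_order all_algebra.
Set Implicit Arguments. Unset Strict Implicit. Unset Printing Implicit Defensive.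
Import Order.TTheory GRing.Theory Num.Theory.
Local Open Scope ring_scope.

Definition is_unital_subring (R : comNzRingType) (S : R -> Prop) : Prop :=
  [/\ S 1, (forall x y, S x -> S y -> S (x - y)) & (forall x y, S x -> S y -> S (x * y))].

Definition is_subalgebra (K : fieldType) (R : comAlgType K) (S : R -> Prop) : Prop :=
  [/\ S 1, (forall x y, S x -> S y -> S (x - y)), (forall x y, S x -> S y -> S (x * y))
    & (forall (c : K) x, S x -> S (c *: x))].

Definition is_ideal (R : comNzRingType) (I : R -> Prop) : Prop :=
  [/\ I 0, (forall x y, I x -> I y -> I (x - y)) & (forall r x, I x -> I (r * x))].

Definition finite_index (R : comNzRingType) (A : R -> Prop) : Prop :=
  exists reps : seq R, forall x : R, exists2 r, r \in reps & A (x - r).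

Definition finite_codim (K : fieldType) (R : comAlgType K) (A : R -> Prop) : Prop :=
  exists (n : nat) (v : 'I_n -> R), forall x : R,
    exists c : 'I_n -> K, A (x - \sum_(i < n) c i *: v i).

Definition conductor (R : comNzRingType) (S : R -> Prop) : R -> Prop :=
  fun x => forall r : R, S (r * x).

(* Main.v *)
Require Import Defs.
From HB Require Import structures.
From mathcomp Require Import all_boot all_order all_algebra.
From mathcomp Require Import ring.
From Stdlib Require Import Classical.
Set Implicit Arguments. Unset Strict Implicit.
Import Order.TTheory GRing.Theory Num.Theory.
Local Open Scope ring_scope.

Section RingPart.
Variable R : comNzRingType.

Lemma fi_ext (A B : R -> Prop) : (forall x, A x <-> B x) -> finite_index A -> finite_index B.
Proof. move=> e [reps H]; exists reps => x; have [r r1 r2] := H x; exists r => //; exact/e. Qed.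

Lemma pick_list (T : eqType) (P : T -> R -> Prop) (L : seq T) :
  exists xs : seq R, forall t, t \in L -> (exists x, P t x) -> exists2 x', x' \in xs & P t x'.
Proof.
elim: L => [|t L [xs IH]]; first by exists [::].
case: (classic (exists x, P t x)) => [[x Hx]|Hn].
- exists (x :: xs) => t'; rewrite in_cons => /orP[/eqP->|Ht] Hex.
  + by exists x; rewrite ?mem_head.
  + by have [x' H1 H2] := IH t' Ht Hex; exists x'; rewrite // in_cons H1 orbT.
- exists xs => t'; rewrite in_cons => /orP[/eqP->|Ht] Hex; first by case: Hn.
  exact: IH.
Qed.

Definition subcl (A : R -> Prop) := forall x y, A x -> A y -> A (x - y).

Lemma fi_inter (A B : R -> Prop) : subcl A -> subcl B -> finite_index A -> finite_index B ->
  finite_index (fun x => A x /\ B x).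
Proof.
move=> sA sB [ra Ha] [rb Hb].
have [xs Hxs] := pick_list (fun p z => A (z - p.1) /\ B (z - p.2)) [seq (a, b) | a <- ra, b <- rb].
exists xs => x; have [a a1 a2] := Ha x; have [b b1 b2] := Hb x.
have [x' x1 [x2 x3]] := Hxs (a, b) (allpairs_f pair a1 b1) (ex_intro _ x (conj a2 b2)).
exists x' => //; split.
- have := sA _ _ a2 x2; by have -> : x - a - (x' - a) = x - x' by ring.
- have := sB _ _ b2 x3; by have -> : x - b - (x' - b) = x - x' by ring.
Qed.

Lemma fi_pre (B : R -> Prop) (y : R) : subcl B -> finite_index B ->
  finite_index (fun x => B (y * x)).
Proof.
move=> sB [rb Hb].
have [xs Hxs] := pick_list (fun b z => B (y * z - b)) rb.
exists xs => x; have [b b1 b2] := Hb (y * x).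
have [x' x1 x2] := Hxs b b1 (ex_intro _ x b2).
exists x' => //; have := sB _ _ b2 x2.
by have -> : y * x - b - (y * x' - b) = y * (x - x') by ring.
Qed.

Lemma cond_fi (S : R -> Prop) (l : seq R) : subcl S -> finite_index S ->
  finite_index (fun x => S x /\ forall r, r \in l -> S (r * x)).
Proof.
move=> sS fS; elim: l => [|r l IH].
  by apply: fi_ext fS => x; split=> [Hx|[]//]; split.
have sA : subcl (fun x => S x /\ forall r, r \in l -> S (r * x)).
  move=> x y [h1 h2] [h3 h4]; split; first exact: sS.
  by move=> r' Hr; rewrite mulrBr; apply: sS; [apply: h2|apply: h4].
have sP : subcl (fun x => S (r * x)).
  by move=> x y h1 h2; rewrite mulrBr; apply: sS.
apply: fi_ext (fi_inter sA sP IH (fi_pre r sS fS)) => x; split.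
- move=> [[h1 h2] h3]; split=> // r'; rewrite in_cons => /orP[/eqP->//|]; exact: h2.
- move=> [h1 h2]; split; last by apply: h2; rewrite mem_head.
  by split=> // r' Hr; apply: h2; rewrite in_cons Hr orbT.
Qed.

Lemma conductor_props (S : R -> Prop) : is_unital_subring S ->
  [/\ is_ideal (conductor S), (forall x, conductor S x -> S x)
    & (forall J : R -> Prop, is_ideal J -> (forall x, J x -> S x) ->
               forall x, J x -> conductor S x)].
Proof.
case=> S1 SB SM; split.
- split.
  + by move=> r; rewrite mulr0 -(subrr 1); apply: SB.
  + by move=> x y hx hy r; rewrite mulrBr; apply: SB.
  + by move=> r x hx r'; rewrite mulrA; apply: hx.
- by move=> x hx; have := hx 1; rewrite mul1r.
- by move=> J [_ _ JM] JS x Jx r; apply: JS; apply: JM.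
Qed.

End RingPart.

Section AlgPart.
Variable K : fieldType.
Variable R : comAlgType K.

Lemma fc_ext (A B : R -> Prop) : (forall x, A x <-> B x) -> finite_codim A -> finite_codim B.
Proof. move=> e [n [v H]]; exists n, v => x; have [c Hc] := H x; exists c; exact/e. Qed.

Definition subsp (A : R -> Prop) :=
  (forall x y, A x -> A y -> A (x - y)) /\ (forall (c : K) x, A x -> A (c *: x)).

Lemma codim_step (D C : R -> Prop) (x0 : R) : subsp C -> finite_codim D ->
  (forall x, D x -> exists k, C (x - k *: x0)) -> finite_codim C.
Proof.
move=> sC [m [w Hw]] HDC.
exists m.+1, (fun i => if unlift ord_max i is Some j then w j else x0) => x.
have [c Hc] := Hw x; have [k Hk] := HDC _ Hc.
exists (fun i => if unlift ord_max i is Some j then c j else k).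
rewrite big_ord_recr /= unlift_none.
have -> : \sum_(i < m) (if unlift ord_max (widen_ord (leqnSn m) i) is Some j then c j else k) *:
      (if unlift ord_max (widen_ord (leqnSn m) i) is Some j then w j else x0)
   = \sum_(i < m) c i *: w i.
  apply: eq_bigr => i _.
  have -> : widen_ord (leqnSn m) i = lift ord_max i by apply: val_inj; exact: (esym (lift_max i)).
  by rewrite liftK.
by move: Hk; rewrite opprD addrA.
Qed.

Lemma codim_inter (A : R -> Prop) (f : R -> R) :
  subsp A -> finite_codim A ->
  (forall x y, f (x - y) = f x - f y) -> (forall (c : K) x, f (c *: x) = c *: f x) ->
  forall n (v : 'I_n -> R) (B : R -> Prop), subsp B ->
    (forall x, exists c : 'I_n -> K, B (x - \sum_(i < n) c i *: v i)) ->
    finite_codim (fun x => A x /\ B (f x)).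
Proof.
move=> sA fA fB fZ; elim=> [|n IH] v B sB HB.
  apply: fc_ext fA => x; split=> [Ax|[]//]; split=> //.
  by have [c] := HB (f x); rewrite big_ord0 subr0.
set vn := v ord_max.
set B' := fun x => exists c : K, B (x - c *: vn).
have sB' : subsp B'.
  split.
  - move=> x y [c hc] [d hd]; exists (c - d); have := sB.1 _ _ hc hd.
    by rewrite scalerBl; have -> : x - c *: vn - (y - d *: vn) = x - y - (c *: vn - d *: vn) by ring.
  - move=> k x [c hc]; exists (k * c); have := sB.2 k _ hc.
    by rewrite scalerBr scalerA.
have HB' : forall x, exists c : 'I_n -> K,
    B' (x - \sum_(i < n) c i *: (fun i => v (widen_ord (leqnSn n) i)) i).
  move=> x; have [c hc] := HB x; exists (fun i => c (widen_ord (leqnSn n) i)).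
  exists (c ord_max); move: hc; rewrite big_ord_recr /=.
  by rewrite opprD addrA.
have IH' := IH _ B' sB' HB'.
case: (classic (exists x0, A x0 /\ B (f x0 - vn))) => [[x0 [Ax0 Bx0]]|Hn].
- apply: (codim_step (D := fun x => A x /\ B' (f x)) (x0 := x0)) IH' _.
    split.
    + by move=> x y [h1 h2] [h3 h4]; split; [apply: sA.1|rewrite fB; apply: sB.1].
    + by move=> k x [h1 h2]; split; [apply: sA.2|rewrite fZ; apply: sB.2].
  move=> x [Ax [c hc]]; exists c; split.
    by apply: sA.1 => //; apply: sA.2.
  have := sB.1 _ _ hc (sB.2 c _ Bx0).
  rewrite fB fZ scalerBr.
  by have -> : f x - c *: vn - (c *: f x0 - c *: vn) = f x - c *: f x0 by ring.
- apply: fc_ext IH' => x; split.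
  + move=> [Ax [c hc]]; split=> //.
    have [c0|c0] := eqVneq c 0; first by move: hc; rewrite c0 scale0r subr0.
    exfalso; apply: Hn; exists (c^-1 *: x); split; first exact: sA.2.
    have := sB.2 c^-1 _ hc; rewrite scalerBr scalerA mulVf // scale1r fZ //.
  + move=> [Ax Bx]; split=> //; exists 0; by rewrite scale0r subr0.
Qed.

End AlgPart.

Theorem mainTheorem1 :
  (forall (R : comNzRingType) (S : R -> Prop),
      is_unital_subring S -> (exists x : R, ~ S x) -> finite_index S ->
      exists I : R -> Prop,
        [/\ is_ideal I, (forall x, I x -> S x), finite_index I,
            (forall x, I x <-> conductor S x)
          & (forall J : R -> Prop, is_ideal J -> (forall x, J x -> S x) ->
               forall x, J x -> I x)])
  /\
  (forall (K : fieldType) (R : comAlgType K) (S : R -> Prop),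
      is_subalgebra S -> (exists x : R, ~ S x) -> finite_codim S ->
      exists I : R -> Prop,
        [/\ is_ideal I, (forall x, I x -> S x), finite_codim I,
            (forall x, I x <-> conductor S x)
          & (forall J : R -> Prop, is_ideal J -> (forall x, J x -> S x) ->
               forall x, J x -> I x)]).
Proof.
split.
- move=> R S HS _ fS; have [c1 c2 c3] := conductor_props HS.
  have fI : finite_index (conductor S).
  case: HS => S1 SB SM.
  have [reps Hr] := fS.
  apply: fi_ext (cond_fi reps SB fS) => x; split.
  + move=> [Sx Hx] r; have [r0 r1 r2] := Hr r.
    have -> : r * x = (r - r0) * x - (0 - r0 * x) by ring.
    apply: (SB); first exact: (SM).
    by apply: (SB); [rewrite -(subrr 1); apply: (SB)|apply: Hx].
  + by move=> Hx; split; [exact: c2|move=> r _; apply: Hx].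
  by exists (conductor S); split; [exact: c1|exact: c2|exact: fI|move=> x; exact: iff_refl|exact: c3].
- move=> K R S HS _ fS.
  have HS' : is_unital_subring S by case: HS.
  have [c1 c2 c3] := conductor_props HS'.
  suff fI : finite_codim (conductor S).
    by exists (conductor S); split; [exact: c1|exact: c2|exact: fI|move=> x; exact: iff_refl|exact: c3].
  case: HS => S1 SB SM SZ.
  have S0 : S 0 by rewrite -(subrr 1); apply: (SB).
  have SD : forall x y : R, S x -> S y -> S (x + y).
    move=> x y hx hy; have -> : x + y = x - (0 - y) by ring.
    by apply: (SB) => //; apply: (SB).
  have sS : subsp S by split.
  have key : forall l : seq R, finite_codim (fun x => S x /\ forall r, r \in l -> S (r * x)).
    elim=> [|r l IH].
      by apply: fc_ext fS => x; split=> [Hx|[]//]; split.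
    have sA : subsp (fun x => S x /\ forall r, r \in l -> S (r * x)).
      split.
      - move=> x y [h1 h2] [h3 h4]; split; first exact: (SB).
        by move=> r' Hr; rewrite mulrBr; apply: (SB); [apply: h2|apply: h4].
      - move=> k x [h1 h2]; split; first exact: SZ.
        by move=> r' Hr; rewrite -scalerAr; apply: SZ; apply: h2.
    have [n [v Hv]] := fS.
    have := codim_inter (f := fun x => r * x) sA IH
      (fun x y => mulrBr r x y) (fun k x => esym (scalerAr k r x)) sS Hv.
    apply: fc_ext => x; split.
    - move=> [[h1 h2] h3]; split=> // r'; rewrite in_cons => /orP[/eqP->//|]; exact: h2.
    - move=> [h1 h2]; split; last by apply: h2; rewrite mem_head.
      by split=> // r' Hr; apply: h2; rewrite in_cons Hr orbT.
  have [n [v Hv]] := fS.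
  apply: fc_ext (key [seq v i | i <- enum 'I_n]) => x; split.
  - move=> [Sx Hx] r; have [c Hc] := Hv r.
    set s := \sum_(i < n) c i *: v i in Hc.
    have -> : r * x = (r - s) * x + s * x by ring.
    apply: (SD); first exact: (SM).
    rewrite /s mulr_suml; apply: (big_ind S); [exact: S0|exact: SD|move=> i _].
    rewrite -scalerAl; apply: SZ; apply: Hx.
    by apply: map_f; rewrite mem_enum.
  - by move=> Hx; split; [exact: c2|move=> r _; apply: Hx].
Qed.
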